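(* Fix a uniformity $r\ge2$, positive integers $\ell>r$ and $s$, and a nonnegative integer $t$. Every $C_{s\ell+rt}^{(r)}$-hom-free $r$-graph is also $C_\ell^{(r)}$-hom-free.
   Context: An $r$-graph is an $r$-uniform hypergraph. For $m>r$, the tight cycle $C_m^{(r)}$ has vertices $v_1,\dots,v_m$ and edges $\{v_i,\dots,v_{i+r-1}\}$, $1\le i\le m$ (indices mod $m$). A homomorphism $F\to G$ is a map $V(F)\to V(G)$ sending each edge of $F$ onto an edge of $G$; $G$ is $F$-hom-free if there is no homomorphism $F\to G$. *)

(* Defs.v *)
From mathcomp Require Import all_boot.
Set Implicit Arguments. Unset Strict Implicit. Unset Printing Implicit Defensive.

Definition uniform (r : nat) (V : finType) (E : {set {set V}}) : Prop :=
  forall e, e \in E -> #|e| = r.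

(* The tight cycle C_m^(r) on vertex set 'I_m (v_1..v_m are 0..m-1):
   its edges are {v_i, ..., v_{i+r-1}} (indices mod m), i.e. for each i the set
   of j with (j - i) mod m < r. *)
Definition tight_cycle (m r : nat) : {set {set 'I_m}} :=
  [set [set j : 'I_m | ((j + m - i) %% m < r)%N] | i : 'I_m].

Definition is_hom (U V : finType) (F : {set {set U}}) (G : {set {set V}})
  (f : U -> V) : Prop :=
  forall e, e \in F -> f @: e \in G.

Definition hom_free (U V : finType) (F : {set {set U}}) (G : {set {set V}}) : Prop :=
  ~ exists f : U -> V, is_hom F G f.

(* Main.v *)
Require Import Defs.
From mathcomp Require Import all_boot zify.

Lemma modc x m : x < m + m -> x %% m = if x < m then x else x - m.
Proof.
move=> h; case: ifP => h1; first by rewrite modn_small.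
have hm : m <= x by rewrite leqNgt h1.
by rewrite -{1}(subnK hm) modnDr modn_small; lia.
Qed.

Lemma char_mod (m r i j : nat) : i < m -> j < m -> r <= m ->
  ((j + m - i) %% m < r) <-> exists2 d, d < r & j = (i + d) %% m.
Proof.
move=> hi hj hr; split.
  move=> h; exists ((j + m - i) %% m) => //.
  rewrite modc in h *; last lia.
  case: (leqP i j) => hij.
    have -> : (j + m - i < m) = false by lia.
    rewrite modc; last lia.
    have -> : (i + (j + m - i - m) < m) = true by lia.
    lia.
  have -> : (j + m - i < m) = true by lia.
  rewrite modc; last lia.
  have -> : (i + (j + m - i) < m) = false by lia.
  lia.
case=> d hd ->.
rewrite (modc (i + d)); last lia.
case: (ltnP (i + d) m) => h.
  rewrite modc; last lia.
  have -> : (i + d + m - i < m) = false by lia.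
  lia.
rewrite modc; last lia.
have -> : (i + d - m + m - i < m) = true by lia.
lia.
Qed.

Definition wn r t l p := if p < r*t then p %% r else (p - r*t) %% l.
Definition cn r t l i := if i < r*t then 0 else (i - r*t) %% l.

Lemma wn_lt r t l p : 0 < r -> r < l -> wn r t l p < l.
Proof.
move=> hr hl; rewrite /wn; case: ifP => _.
  by apply: leq_trans (ltn_pmod _ hr) (ltnW hl).
by apply: ltn_pmod; lia.
Qed.

Lemma cn_lt r t l p : 0 < r -> r < l -> cn r t l p < l.
Proof.
move=> hr hl; rewrite /cn; case: ifP => _; first lia.
by apply: ltn_pmod; lia.
Qed.

Lemma core r l s t i x : 0 < r -> r < l -> 0 < s -> i < s*l + r*t -> x < l ->
 (exists2 d, d < r & x = wn r t l ((i+d) %% (s*l+r*t))) <->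
 (exists2 d, d < r & x = (cn r t l i + d) %% l).
Proof.
move=> hr hl hs hi hx.
have hsl : l <= s * l by rewrite leq_pmull.
rewrite /cn; case: (ltnP i (r*t)) => hit.
  have E : forall d, d < r -> wn r t l ((i+d) %% (s*l+r*t)) = (i + d) %% r.
    move=> d hd; rewrite (modn_small (m:=i+d)); last lia.
    rewrite /wn; case: ifP => // h.
    have ht : r * t = t * r by rewrite mulnC.
    have -> : i + d = t * r + (i + d - r * t) by lia.
    rewrite modnMDl !modn_small //; lia.
  split.
    case=> d hd ->; rewrite E //; exists ((i+d) %% r); first exact: ltn_pmod.
    rewrite add0n (modn_small (m := (i+d) %% r)) //; apply: leq_trans (ltn_pmod _ hr) (ltnW hl).
  case=> d hd ->; rewrite add0n modn_small; last lia.
  have ha : i %% r < r by exact: ltn_pmod.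
  have hd' : (if i %% r <= d then d - i %% r else d + r - i %% r) < r.
    move: (i %% r) ha => a ha; case: ifP => h; lia.
  exists (if i %% r <= d then d - i %% r else d + r - i %% r) => //.
  rewrite E // -modnDml.
  move: (i %% r) ha {hd'} => a ha.
  case: (leqP a d) => h.
    rewrite modc; last lia.
    case: ifP => h2; lia.
  rewrite modc; last lia.
  case: ifP => h2; lia.
have E : forall d, d < r -> wn r t l ((i+d) %% (s*l+r*t)) = ((i - r*t) %% l + d) %% l.
  move=> d hd; rewrite modnDml.
  rewrite modc; last lia.
  case: ifP => h1.
    rewrite /wn ifF; last lia.
    congr (_ %% _); lia.
  have -> : i - r * t + d = s * l + (i + d - (s * l + r * t)).
    move: (s * l) (r * t) hit h1 hi => A B; lia.
  rewrite modnMDl /wn; case: ifP => h2.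
    rewrite !modn_small //; lia.
  have -> : r * t = 0.
    case: t hit h1 h2 hi => [|t'] *; first by rewrite muln0.
    lia.
  by rewrite subn0.
split; case=> d hd ->; exists d => //; by rewrite E.
Qed.

Theorem proposition2p3 (r l s t : nat) (V : finType) (E : {set {set V}}) :
  (2 <= r)%N -> (r < l)%N -> (0 < s)%N -> uniform r E ->
  hom_free (tight_cycle (s * l + r * t) r) E ->
  hom_free (tight_cycle l r) E.
Proof.
move=> hr hl hs _ hfree [f hf]; apply: hfree.
have hr0 : 0 < r by lia.
have hsl : l <= s * l by rewrite leq_pmull.
set m := s * l + r * t.
have hrm : r <= m by lia.
have hrl : r <= l by lia.
pose w (p : 'I_m) : 'I_l := Ordinal (wn_lt r t l p hr0 hl).
exists (f \o w) => e /imsetP [i _ ->].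
rewrite imset_comp; apply: hf.
apply/imsetP; exists (Ordinal (cn_lt r t l i hr0 hl)) => //.
apply/setP => y; rewrite inE; apply/imsetP/idP.
  case=> j; rewrite inE => hj ->.
  apply/(char_mod _ _ _ _ (cn_lt r t l i hr0 hl) (ltn_ord (w j)) hrl) => /=.
  apply/(core r l s t i (w j) hr0 hl hs (ltn_ord i) (ltn_ord (w j))) => /=.
  case/(char_mod _ _ _ _ (ltn_ord _) (ltn_ord _) hrm): hj => d hd hjd.
  by exists d => //; rewrite -hjd.
move=> hy.
case/(char_mod _ _ _ _ (cn_lt r t l i hr0 hl) (ltn_ord _) hrl): hy => d hd hyd.
have [d' hd' hy'] : exists2 d, d < r & nat_of_ord y = wn r t l ((i+d) %% m).
  apply/(core r l s t i _ hr0 hl hs (ltn_ord i) (ltn_ord _)) => //; by exists d.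
have hjm : (i + d') %% m < m by apply: ltn_pmod; lia.
exists (Ordinal hjm).
  rewrite inE; apply/(char_mod _ _ _ _ (ltn_ord _) hjm hrm).
  by exists d'.
by apply: val_inj.
Qed.
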